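(* Let $\prec$ be a reflection order on $T$. Suppose $\Gamma$ contains a diamond with distinct vertices $b,l,r,w$ and edges $b\xrightarrow{t_1}l\xrightarrow{t_2}w$ and $b\xrightarrow{t_1'}r\xrightarrow{t_2'}w$, where $t_1\prec t_1'$. Then $$t_1\prec t_2\succ t_2'\prec t_1'\succ t_1.$$ In particular, if $x_1\to x_2\to x_4$ is an increasing pair of edges, then its diamond flip (the unique pair of edges $x_1\to x_3\to x_4$ such that $\{x_1,x_2,x_3,x_4\}$ is a diamond) is a decreasing pair of edges.
   Context: $S_n$ is the symmetric group with simple reflections $s_i=(i\ i{+}1)$, length function $\ell$, and $T$ the set of all transpositions (reflections). The Bruhat graph $\Gamma$ is the directed graph on $S_n$ with an edge $w\xrightarrow{t}tw$, labelled by $t$, whenever $t\in T$ and $\ell(w)<\ell(tw)$. A reflection order is a total order $\prec$ on $T$ such that for all $1\le a<b<c\le n$ either $(a\,b)\prec(a\,c)\prec(b\,c)$ or $(b\,c)\prec(a\,c)\prec(a\,b)$. A pair of consecutive edges $x\xrightarrow{t}y\xrightarrow{t'}z$ is increasing if $t\prec t'$ and decreasing if $t\succ t'$. A diamond is a subgraph of $\Gamma$ with four distinct vertices $x_1,x_2,x_3,x_4$ and edges $x_1\to x_2\to x_4$, $x_1\to x_3\to x_4$. *)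

(* Defs.v *)
From mathcomp Require Import all_boot all_order all_fingroup.
Set Implicit Arguments. Unset Strict Implicit. Unset Printing Implicit Defensive.

Section Bruhat.
Variable n : nat.

Definition is_refl (t : 'S_n) : bool :=
  [exists i : 'I_n, exists j : 'I_n, (i != j) && (t == tperm i j)].

(* Coxeter length of w in S_n = number of inversions *)
Definition perm_length (w : 'S_n) : nat :=
  #|[set p : 'I_n * 'I_n | (p.1 < p.2)%N && (w p.2 < w p.1)%N]|.

(* Composition t w (first w, then t) as functions. In mathcomp
   (s * t) x = t (s x), so t w is written  w * t. *)
Definition lmul (t w : 'S_n) : 'S_n := (w * t)%g.

Definition bedge (w t v : 'S_n) : bool :=
  [&& is_refl t, v == lmul t w & perm_length w < perm_length v].

(* A reflection order: a strict total order on T (the relation is only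
   meaningful on T) such that for all a<b<c either
   (a b) < (a c) < (b c) or (b c) < (a c) < (a b). *)
Definition reflection_order (prec : rel 'S_n) : Prop :=
  [/\ (forall t, is_refl t -> ~~ prec t t),
      (forall t1 t2 t3, is_refl t1 -> is_refl t2 -> is_refl t3 ->
         prec t1 t2 -> prec t2 t3 -> prec t1 t3),
      (forall t1 t2, is_refl t1 -> is_refl t2 -> t1 != t2 ->
         prec t1 t2 || prec t2 t1) &
      (forall a b c : 'I_n, (a < b)%N -> (b < c)%N ->
         (prec (tperm a b) (tperm a c) && prec (tperm a c) (tperm b c))
         || (prec (tperm b c) (tperm a c) && prec (tperm a c) (tperm a b)))].

Definition diamond (x1 x2 x3 x4 s1 s2 s3 s4 : 'S_n) : bool :=
  [&& uniq [:: x1; x2; x3; x4], bedge x1 s1 x2, bedge x2 s2 x4,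
      bedge x1 s3 x3 & bedge x3 s4 x4].

End Bruhat.

(* Main.v *)
Require Import Defs.
From mathcomp Require Import all_boot all_order all_fingroup zify.
Set Implicit Arguments. Unset Strict Implicit. Unset Printing Implicit Defensive.

Section SA.
Variable n : nat.

Definition btw (P Q x : 'I_n) : bool := (P < x)%N && (x < Q)%N.

Lemma btw_tperm (P Q x : 'I_n) : (P < Q)%N -> btw P Q (tperm P Q x) = btw P Q x.
Proof. rewrite /btw => PQ; case: tpermP => [->|->|//]; lia. Qed.

Definition gmap (P Q : 'I_n) (pr : 'I_n * 'I_n) : 'I_n * 'I_n :=
  if btw P Q pr.1 || btw P Q pr.2 then pr else (tperm P Q pr.1, tperm P Q pr.2).

Lemma gmapK (P Q : 'I_n) : (P < Q)%N -> involutive (gmap P Q).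
Proof.
move=> PQ [a b]; rewrite /gmap /=.
case H: (btw P Q a || btw P Q b); first by rewrite /= H.
by rewrite /= !btw_tperm // H !tpermK.
Qed.

Lemma lenA (w : 'S_n) (P Q : 'I_n) : (P < Q)%N -> (w P < w Q)%N ->
  (perm_length w < perm_length (w * tperm (w P) (w Q))%g)%N.
Proof.
move=> PQ wPQ.
set v := (w * _)%g.
have vE : forall x, v x = w (tperm P Q x).
  move=> x; rewrite /v permM; case: (tpermP P Q x) => [->|->|xP xQ].
  - by rewrite tpermL.
  - by rewrite tpermR.
  - by rewrite tpermD // (inj_eq perm_inj) eq_sym; apply/eqP.
rewrite /perm_length.
set Iw := [set p : 'I_n * 'I_n | _].
set Iv := [set p : 'I_n * 'I_n | _].
have ginj : injective (gmap P Q) := can_inj (gmapK PQ).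
rewrite -(card_imset Iw ginj).
have PQv : (P, Q) \in Iv by rewrite inE /= !vE tpermL tpermR PQ.
rewrite (cardsD1 (P, Q) Iv) PQv add1n ltnS.
apply: subset_leq_card; apply/subsetP => _ /imsetP [[p q] + ->].
rewrite inE /= => /andP [pq wqp].
rewrite !inE /gmap /=.
have ne : forall a b : 'I_n, a <> b -> (nat_of_ord a <> nat_of_ord b) by move=> a b H E; apply H, val_inj.
case: ifP => [|Hb] /=.
{ rewrite /btw => Hb.
  apply/andP; split.
    apply/negP => /eqP [e1 e2]; subst; lia.
  rewrite pq !vE /=.
  case: (tpermP P Q q) => [eq|eq|qP qQ]; case: (tpermP P Q p) => [ep|ep|pP pQ]; subst => //; try lia.
  all: (repeat match goal with H : ?a <> ?b |- _ => move: (ne _ _ H); clear H end); lia. }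
move: Hb; rewrite /btw => /negbT; rewrite negb_or negb_and negb_and => /andP [Hb1 Hb2].
apply/andP; split.
{ apply/negP => /eqP [].
  case: (tpermP P Q q) => [eq|eq|qP qQ]; case: (tpermP P Q p) => [ep|ep|pP pQ]; subst => //; try lia.
  all: (repeat match goal with H : ?a <> ?b |- _ => move: (ne _ _ H); clear H end); lia. }
rewrite !vE !tpermK wqp andbT.
case: (tpermP P Q q) => [eq|eq|qP qQ]; case: (tpermP P Q p) => [ep|ep|pP pQ]; subst => //; try lia.
all: (repeat match goal with H : ?a <> ?b |- _ => move: (ne _ _ H); clear H end); lia.
Qed.
End SA.

Ltac tpe := repeat match goal with
 | |- context [@fun_of_perm.body _ (@tperm _ ?a ?b) ?c] => first [ rewrite (tpermL a b) | rewrite (tpermR a b) | rewrite (@tpermD _ a b c); [| by apply/eqP; congruence | by apply/eqP; congruence] ]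
 end.

Ltac cpt v a := case: (v =P a) => [->|?].

Section SG.
Variable n : nat.
Implicit Types a b c p q r s x y z w : 'I_n.

Lemma tp2 r s a b : tperm r s a = b -> a <> b -> tperm r s = tperm a b.
Proof.
case: tpermP => [-> <-|-> <-|_ _ -> //] _ //; exact: tpermC.
Qed.

Lemma S1 (u : 'S_n) p q r s : p <> q -> u = (tperm p q * tperm r s)%g -> u p = p -> u = 1%g.
Proof.
move=> pq ->; rewrite permM tpermL => /tp2 H.
by rewrite H; [rewrite tpermC tperm2 | congruence].
Qed.

Lemma G3 a b c p q r s : a <> b -> b <> c -> a <> c -> p <> q -> r <> s ->
  (tperm a b * tperm b c = tperm p q * tperm r s)%g -> tperm p q <> tperm a b ->
  (tperm p q = tperm b c /\ tperm r s = tperm a c) \/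
  (tperm p q = tperm a c /\ tperm r s = tperm a b).
Proof.
move=> ab bc ac pq rs E Hne.
move: E; move Eu: (tperm a b * tperm b c)%g => u E.
have ua : u a = c by rewrite -Eu permM; tpe; done.
have Hu1 : u <> 1%g by move=> e; move: ua; rewrite e perm1; congruence.
have T'E : tperm r s = (tperm p q * u)%g by rewrite E mulgA tperm2 mul1g.
have pin : p = a \/ p = b \/ p = c.
  cpt p a; [by left|]. cpt p b; [by right; left|]. cpt p c; [by right; right|].
  exfalso; apply: (Hu1 (S1 pq E _)); rewrite -Eu permM; tpe; done.
have qin : q = a \/ q = b \/ q = c.
  cpt q a; [by left|]. cpt q b; [by right; left|]. cpt q c; [by right; right|].
  exfalso; apply: (Hu1 (@S1 _ q p r s _ _ _)); [congruence| by rewrite tpermC|].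
  rewrite -Eu permM; tpe; done.
case: pin => [?|[?|?]]; case: qin => [?|[?|?]]; subst; try congruence.
- right; split => //; rewrite T'E; apply/permP => v; rewrite !permM.
  cpt v a; tpe => //; cpt v b; tpe => //; cpt v c; tpe => //.
- by case: Hne; rewrite tpermC.
- left; split => //; rewrite T'E; apply/permP => v; rewrite !permM.
  cpt v a; tpe => //; cpt v b; tpe => //; cpt v c; tpe => //.
- right; split; first exact: tpermC. rewrite T'E; apply/permP => v; rewrite !permM.
  cpt v a; tpe => //; cpt v b; tpe => //; cpt v c; tpe => //.
- left; split; first exact: tpermC. rewrite T'E; apply/permP => v; rewrite !permM.
  cpt v a; tpe => //; cpt v b; tpe => //; cpt v c; tpe => //.
Qed.

Lemma S2 (u : 'S_n) p q r s : p <> q -> r <> s -> tperm r s = (tperm p q * u)%g ->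
  u q <> p -> u p = tperm p (u q) q.
Proof.
move=> pq rs T'E uq.
have h1 : tperm r s p = u q by rewrite T'E permM tpermL.
have h2 : tperm r s q = u p by rewrite T'E permM tpermR.
by rewrite -h2 (tp2 h1) //; congruence.
Qed.

Lemma Gdisj x y z w p q r s : x <> y -> x <> z -> x <> w -> y <> z -> y <> w -> z <> w ->
  p <> q -> r <> s ->
  (tperm x y * tperm z w = tperm p q * tperm r s)%g -> tperm p q <> tperm x y ->
  tperm p q = tperm z w /\ tperm r s = tperm x y.
Proof.
move=> xy xz xw yz yw zw pq rs E Hne.
move: E; move Eu: (tperm x y * tperm z w)%g => u E.
have ux : u x = y by rewrite -Eu permM; tpe; done.
have Hu1 : u <> 1%g by move=> e; move: ux; rewrite e perm1; congruence.
have T'E : tperm r s = (tperm p q * u)%g by rewrite E mulgA tperm2 mul1g.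
have pin : p = x \/ p = y \/ p = z \/ p = w.
  cpt p x; [by left|]. cpt p y; [by right; left|]. cpt p z; [by right; right; left|].
  cpt p w; [by right; right; right|].
  exfalso; apply: (Hu1 (S1 pq E _)); rewrite -Eu permM; tpe; done.
have qin : q = x \/ q = y \/ q = z \/ q = w.
  cpt q x; [by left|]. cpt q y; [by right; left|]. cpt q z; [by right; right; left|].
  cpt q w; [by right; right; right|].
  exfalso; apply: (Hu1 (@S1 _ q p r s _ _ _)); [congruence| by rewrite tpermC|].
  rewrite -Eu permM; tpe; done.
case: pin => [?|[?|[?|?]]]; case: qin => [?|[?|[?|?]]]; subst p q; try congruence.
all: try (by case: Hne; rewrite tpermC).
all: try (split; [done| rewrite T'E -Eu; apply/permP => v; rewrite !permM;
  cpt v x; tpe => //; cpt v y; tpe => //; cpt v z; tpe => //; cpt v w; tpe => //]).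
all: try (split; [exact: tpermC| rewrite T'E -Eu; apply/permP => v; rewrite !permM;
  cpt v x; tpe => //; cpt v y; tpe => //; cpt v z; tpe => //; cpt v w; tpe => //]).
all: exfalso; have := S2 pq rs T'E; rewrite -Eu !permM; tpe.
all: move=> H; have H' := H ltac:(congruence); congruence.
Qed.

Lemma G x y z w p q r s : x <> y -> z <> w -> p <> q -> r <> s ->
  (tperm x y * tperm z w = tperm p q * tperm r s)%g -> tperm p q <> tperm x y ->
  (tperm x y * tperm z w <> 1)%g ->
  (tperm p q = tperm z w /\ tperm r s = tperm x y) \/
  exists a b c, [/\ a <> b, b <> c, a <> c, tperm x y = tperm a b /\ tperm z w = tperm b c &
    ((tperm p q = tperm b c /\ tperm r s = tperm a c) \/
    (tperm p q = tperm a c /\ tperm r s = tperm a b))].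
Proof.
move=> xy zw pq rs E Hne H1.
case: (y =P z) => [e|yz]; [subst y|].
  case: (x =P w) => [e|xw]; [subst x|].
    by exfalso; apply: H1; rewrite tpermC tperm2.
  right; exists x, z, w; split; try congruence; [by split|exact: G3].
case: (y =P w) => [e|yw]; [subst y|].
  case: (x =P z) => [e|xz]; [subst x|].
    by exfalso; apply: H1; rewrite tperm2.
  right; exists x, w, z; split; try congruence; [split => //; exact: tpermC|].
  by apply: G3 => //; try congruence; rewrite -(tpermC z w).
case: (x =P z) => [e|xz]; [subst x|].
  right; exists y, z, w; split; try congruence; [split => //; exact: tpermC|].
  by apply: G3 => //; try congruence; rewrite -(tpermC z y).
case: (x =P w) => [e|xw]; [subst x|].
  right; exists y, w, z; split; try congruence; [split; exact: tpermC|].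
  by apply: G3 => //; try congruence; rewrite (tpermC y w) ?(tpermC w z).
by left; apply: Gdisj.
Qed.
End SG.

Section SM.
Variable n : nat.
Implicit Types a b c x y : 'I_n.

Lemma bedge_refl (w t v : 'S_n) : bedge w t v -> exists x y, x <> y /\ t = tperm x y.
Proof.
case/and3P => /existsP [x /existsP [y /andP [xy /eqP ->]]] _ _.
by exists x, y; split => //; apply/eqP.
Qed.

Lemma bedge_eq (w t v : 'S_n) : bedge w t v -> v = (w * t)%g.
Proof. by case/and3P => _ /eqP. Qed.

Lemma bedge_lt (w t v : 'S_n) : bedge w t v -> (perm_length w < perm_length v)%N.
Proof. by case/and3P. Qed.

Lemma refl_tp x y : x <> y -> is_refl (tperm x y).
Proof. move=> xy; apply/existsP; exists x; apply/existsP; exists y; rewrite eqxx andbT; exact/eqP. Qed.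

Lemma up_ord (w v : 'S_n) x y : bedge w (tperm x y) v -> (x < y)%N -> ((w^-1)%g x < (w^-1)%g y)%N.
Proof.
move=> e xy; have lt := bedge_lt e; have ev := bedge_eq e.
rewrite ltnNge leq_eqVlt negb_or; apply/andP; split.
  apply/negP => /eqP/val_inj/perm_inj E; rewrite E in xy; by rewrite ltnn in xy.
apply/negP => H.
have vQ : v ((w^-1)%g y) = x by rewrite ev permM permKV tpermR.
have vP : v ((w^-1)%g x) = y by rewrite ev permM permKV tpermL.
have := @lenA _ v _ _ H; rewrite vQ vP => /(_ xy).
rewrite ev -mulgA tperm2 mulg1 -ev; lia.
Qed.

Lemma ord_eq (w v : 'S_n) x y : bedge w (tperm x y) v -> x <> y ->
  ((w^-1)%g x < (w^-1)%g y)%N = (x < y)%N.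
Proof.
move=> e xy; case: (ltngtP x y) => H.
- by rewrite (up_ord e H).
- rewrite tpermC in e; have := up_ord e H; lia.
- by case: xy; apply: val_inj.
Qed.

Lemma invE (w : 'S_n) a b z : ((w * tperm a b)^-1)%g z = (w^-1)%g (tperm a b z).
Proof. by rewrite invMg tpermV permM. Qed.

Lemma ne_nat a b : a <> b -> nat_of_ord a <> nat_of_ord b.
Proof. by move=> H E; apply H, val_inj. Qed.

End SM.

Theorem lemma3p2 (n : nat) (prec : rel 'S_n) :
  reflection_order prec ->
  (forall b l r w t1 t2 t1' t2' : 'S_n,
     diamond b l r w t1 t2 t1' t2' -> prec t1 t1' ->
     [/\ prec t1 t2, prec t2' t2, prec t2' t1' & prec t1 t1'])
  /\
  (forall x1 x2 x3 x4 s1 s2 s3 s4 : 'S_n,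
     bedge x1 s1 x2 -> bedge x2 s2 x4 -> prec s1 s2 ->
     diamond x1 x2 x3 x4 s1 s2 s3 s4 -> prec s4 s3).
Proof.
case=> irr tr tot axm.
have asym : forall X Y, is_refl X -> is_refl Y -> prec X Y -> prec Y X -> False.
  move=> X Y RX RY h1 h2; have := irr X RX; by rewrite (tr X Y X RX RY RX h1 h2).
have tr2 : forall X Y Z, prec X Y -> prec Y Z -> is_refl X -> is_refl Y -> is_refl Z -> prec X Z.
  by move=> X Y Z h1 h2 RX RY RZ; exact: (tr X Y Z RX RY RZ h1 h2).
have tri : forall a b c : 'I_n, ((a < b < c) || (c < b < a))%N ->
  (prec (tperm a b) (tperm a c) && prec (tperm a c) (tperm b c))
  || (prec (tperm b c) (tperm a c) && prec (tperm a c) (tperm a b)).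
  move=> a b c /orP [/andP [ab bc]|/andP [cb ba]]; first exact: axm.
  have := axm _ _ _ cb ba; rewrite orbC (tpermC c b) (tpermC c a) (tpermC b a).
  by case/orP => /andP [-> ->]; rewrite ?orbT.
have P1 : forall b l r w t1 t2 t1' t2' : 'S_n,
     diamond b l r w t1 t2 t1' t2' -> prec t1 t1' ->
     [/\ prec t1 t2, prec t2' t2, prec t2' t1' & prec t1 t1'].
  move=> bo l r w t1 t2 t1' t2' /and5P [U e1 e2 e3 e4] H.
  have [x [y [xy Et1]]] := bedge_refl e1.
  have [z [z' [zz Et2]]] := bedge_refl e2.
  have [p [q [pq Et1']]] := bedge_refl e3.
  have [r' [s [rs Et2']]] := bedge_refl e4.
  have El := bedge_eq e1; have Ew := bedge_eq e2; have Er := bedge_eq e3; have Ew' := bedge_eq e4.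
  move: U; rewrite /= !inE !negb_or => /and4P [/and3P [Ubl Ubr Ubw] /andP [Ulr Ulw] Urw _].
  have E : (t1 * t2 = t1' * t2')%g.
    apply: (@mulgI _ bo); rewrite !mulgA -El -Er -Ew; exact: Ew'.
  have Hne : t1' <> t1 by move=> e; move: Ulr; rewrite El Er e eqxx.
  have H1 : (t1 * t2 <> 1)%g by move=> e; move: Ubw; rewrite Ew El -mulgA e mulg1 eqxx.
  rewrite Et1 Et2 Et1' Et2' in E Hne H1.
  have [[e5 e6]|[a [b [c [ab bc ac [ea eb] HT]]]]] := G xy zz pq rs E Hne H1.
    have h1 : t1' = t2 by rewrite Et1' Et2.
    have h2 : t2' = t1 by rewrite Et2' Et1.
    by rewrite h2 h1 in H *; split.
  rewrite Et1 Et2 ea eb in e1 e2 H *.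
  have Ra := refl_tp ab; have Rb := refl_tp bc; have Rc := refl_tp ac.
  have E1 := ord_eq e1 ab.
  have E2 := ord_eq e2 bc.
  rewrite El Et1 ea !invE in E2; move: E2; tpe => E2.
  have nab := ne_nat ab; have nbc := ne_nat bc; have nac := ne_nat ac.
  have Hmid : ((a < b < c) || (c < b < a))%N \/ ((b < a < c) || (c < a < b))%N \/
             ((a < c < b) || (b < c < a))%N by clear -nab nbc nac; lia.
  case: HT => [[f1 f2]|[f1 f2]]; rewrite Et1' Et2' f1 f2 in e3 e4 H *.
  { have E3 := ord_eq e3 bc.
    have E4 := ord_eq e4 ac.
    rewrite Er Et1' f1 !invE in E4; move: E4; tpe => E4.
    split => //.
    all: case: Hmid => [m|[m|m]]; [have := tri _ _ _ m | have := tri b a c m | have := tri a c b m].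
    all: rewrite ?(tpermC b a) ?(tpermC c b).
    all: case/orP => /andP [h1 h2].
    all: have h3 := tr2 _ _ _ h1 h2 ltac:(assumption) ltac:(assumption) ltac:(assumption).
    all: first [ done | (exfalso; clear -E1 E2 E3 E4 m; lia)
      | by exfalso; apply: (asym _ _ _ _ H h1) | by exfalso; apply: (asym _ _ _ _ H h2)
      | by exfalso; apply: (asym _ _ _ _ H h3) ]. }
  { have E3 := ord_eq e3 ac.
    have E4 := ord_eq e4 ab.
    rewrite Er Et1' f1 !invE in E4; move: E4; tpe => E4.
    split => //.
    all: case: Hmid => [m|[m|m]]; [have := tri _ _ _ m | have := tri b a c m | have := tri a c b m].
    all: rewrite ?(tpermC b a) ?(tpermC c b).
    all: case/orP => /andP [h1 h2].
    all: have h3 := tr2 _ _ _ h1 h2 ltac:(assumption) ltac:(assumption) ltac:(assumption).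
    all: first [ done | (exfalso; clear -E1 E2 E3 E4 m; lia)
      | by exfalso; apply: (asym _ _ _ _ H h1) | by exfalso; apply: (asym _ _ _ _ H h2)
      | by exfalso; apply: (asym _ _ _ _ H h3) ]. }
split => //.
move=> x1 x2 x3 x4 s1 s2 s3 s4 _ _ H12 D.
have D' := D; case/and5P: D' => U e1 e2 e3 e4.
have R1 : is_refl s1 by case/and3P: e1.
have R2 : is_refl s2 by case/and3P: e2.
have R3 : is_refl s3 by case/and3P: e3.
have R4 : is_refl s4 by case/and3P: e4.
have U' := U.
move: U'; rewrite /= !inE !negb_or => /and4P [/and3P [u12 u13 u14] /andP [u23 u24] u34 _].
have ne : s1 != s3.
  apply/eqP => e; move: u23; rewrite (bedge_eq e1) (bedge_eq e3) e eqxx //.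
case/orP: (tot s1 s3 R1 R3 ne) => h.
  by case: (P1 _ _ _ _ _ _ _ _ D h).
have D2 : diamond x1 x3 x2 x4 s3 s4 s1 s2.
  rewrite /diamond e1 e2 e3 e4 /= !inE !negb_or u12 u13 u14 u24 u34 (eq_sym x3 x2) u23.
  by [].
case: (P1 _ _ _ _ _ _ _ _ D2 h) => _ _ h21 _.
by exfalso; apply: (asym _ _ R1 R2 H12 h21).
Qed.
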